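(* Let $(\Omega,+)$ be a group, $a,b$ subgroups, and $x,y,z\subseteq\Omega$ with $x\top b$, $y\top b$, $z\top b$, $a\top x$, $a\top y$. Write $x=G_X$ and $z=G_Z$ as left graphs with respect to the decomposition $\Omega\cong y\times b$, i.e. $G_X=\{\eta+X(\eta):\eta\in y\}$, $G_Z=\{\eta+Z(\eta):\eta\in y\}$ with (unique) maps $X,Z:y\to b$. Then $\Gamma(G_X,a,y,b,G_Z)=G_{X+Z\circ\mathrm{B}^{a,x,b}_y}$, i.e. $\Gamma(x,a,y,b,z)$ is the left graph of the map $y\to b$, $\eta\mapsto X(\eta)+Z(\mathrm{B}^{a,x,b}_y(\eta))$.
   Context: $(\Omega,+)$ is a group written additively but not necessarily abelian. For subsets $u,v$, $u\top v$ means every $\omega$ has a unique decomposition $\omega=\mu+\nu$ with $\mu\in u,\nu\in v$; then $P^u_v(\omega):=\nu$ and $\check P^v_u(\omega):=\mu$. The canonical kernel is $\mathrm{B}^{a,x,b}_y:y\to y$, $\eta\mapsto P^a_y(\check P^b_x(\eta))$. $\Gamma(x,a,y,b,z)=\{\omega:\exists\alpha\in a,\beta\in b:\ \alpha+\omega+\beta\in y,\ \alpha+\omega\in z,\ \omega+\beta\in x\}$. *)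

(* Defs.v *)
From Stdlib Require Import ClassicalEpsilon.

Set Implicit Arguments.

Section Defs.
Variables (T : Type) (add : T -> T -> T) (zero : T) (opp : T -> T).

Definition is_group : Prop :=
  (forall x y z, add x (add y z) = add (add x y) z) /\
  (forall x, add zero x = x) /\ (forall x, add x zero = x) /\
  (forall x, add (opp x) x = zero) /\ (forall x, add x (opp x) = zero).

Definition is_subgroup (a : T -> Prop) : Prop :=
  a zero /\ (forall x y, a x -> a y -> a (add x y)) /\ (forall x, a x -> a (opp x)).

Definition top (u v : T -> Prop) : Prop :=
  forall w, exists mu nu, u mu /\ v nu /\ w = add mu nu /\
    forall mu' nu', u mu' -> v nu' -> w = add mu' nu' -> mu' = mu /\ nu' = nu.

(* P^u_v(w) := nu  (the v-component); meaningful when u ⊤ v *)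
Definition P (u v : T -> Prop) (w : T) : T :=
  epsilon (inhabits zero) (fun nu => v nu /\ exists mu, u mu /\ w = add mu nu).

(* check P^v_u(w) := mu  (the u-component of w = mu + nu, mu in u, nu in v) *)
Definition Pcheck (v u : T -> Prop) (w : T) : T :=
  epsilon (inhabits zero) (fun mu => u mu /\ exists nu, v nu /\ w = add mu nu).

Definition Bker (a x b y : T -> Prop) (eta : T) : T := P a y (Pcheck b x eta).

Definition Gamma (x a y b z : T -> Prop) (w : T) : Prop :=
  exists al be, a al /\ b be /\ y (add (add al w) be) /\ z (add al w) /\ x (add w be).

Definition left_graph (y : T -> Prop) (F : T -> T) (w : T) : Prop :=
  exists eta, y eta /\ w = add eta (F eta).

End Defs.

(* Main.v *)
Require Import Defs.
From Stdlib Require Import ClassicalEpsilon.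

Theorem theorem8p1 (T : Type) (add : T -> T -> T) (zero : T) (opp : T -> T)
  (Hgrp : is_group add zero opp)
  (a b x y z : T -> Prop)
  (Ha : is_subgroup add zero opp a) (Hb : is_subgroup add zero opp b)
  (Hxb : top add x b) (Hyb : top add y b) (Hzb : top add z b)
  (Hax : top add a x) (Hay : top add a y)
  (X Z : T -> T)
  (HXb : forall eta, y eta -> b (X eta)) (HZb : forall eta, y eta -> b (Z eta))
  (HxX : forall w, x w <-> left_graph add y X w)
  (HzZ : forall w, z w <-> left_graph add y Z w) :
  forall w, Gamma add x a y b z w <->
    left_graph add y (fun eta => add (X eta) (Z (Bker add zero a x b y eta))) w.
Proof.
  destruct Hgrp as [As [L0 [R0 [LV RV]]]].
  destruct Ha as [a0 [aD aN]]. destruct Hb as [b0 [bD bN]].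
  assert (K1 : forall u v, add (opp u) (add u v) = v).
  { intros u v. rewrite As, LV, L0. reflexivity. }
  assert (K2 : forall u v, add (add u v) (opp v) = u).
  { intros u v. rewrite <- As, RV, R0. reflexivity. }
  assert (Pc : forall xi nu eta, x xi -> b nu -> eta = add xi nu -> Pcheck add zero b x eta = xi).
  { intros xi nu eta Hx Hn He. unfold Pcheck.
    destruct (epsilon_spec (inhabits zero) (fun mu => x mu /\ exists nu, b nu /\ eta = add mu nu))
      as [Hm [n [Hn2 He2]]].
    - exists xi. split; [exact Hx|]. exists nu. auto.
    - destruct (Hxb eta) as [m0 [n0 [_ [_ [_ U]]]]].
      destruct (U _ _ Hm Hn2 He2) as [E1 _]. destruct (U _ _ Hx Hn He) as [E2 _].
      congruence. }
  assert (Pp : forall al zeta w, a al -> y zeta -> w = add al zeta -> P add zero a y w = zeta).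
  { intros al zeta w Hal Hz He. unfold P.
    destruct (epsilon_spec (inhabits zero) (fun nu => y nu /\ exists mu, a mu /\ w = add mu nu))
      as [Hm [n [Hn2 He2]]].
    - exists zeta. split; [exact Hz|]. exists al. auto.
    - destruct (Hay w) as [m0 [n0 [_ [_ [_ U]]]]].
      destruct (U _ _ Hn2 Hm He2) as [_ E1]. destruct (U _ _ Hal Hz He) as [_ E2].
      congruence. }
  intro w. split.
  - intros [al [be [Hal [Hbe [Hy [Hz Hx]]]]]].
    destruct (proj1 (HxX _) Hx) as [eta0 [Hy0 E0]].
    destruct (proj1 (HzZ _) Hz) as [zeta [Hyz Ez]].
    set (s := add (add al w) be) in *.
    destruct (Hyb s) as [m [n [_ [_ [_ U]]]]].
    destruct (U s zero Hy b0 (eq_sym (R0 s))) as [Es1 Es2].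
    assert (Hs : s = add zeta (add (Z zeta) be)).
    { unfold s. rewrite Ez, As. reflexivity. }
    destruct (U _ _ Hyz (bD _ _ (HZb _ Hyz) Hbe) Hs) as [Es3 Es4].
    assert (Ezs : zeta = s) by congruence.
    assert (Ezb : add (Z zeta) be = zero) by congruence.
    assert (Hpc : Pcheck add zero b x eta0 = add w be).
    { apply (Pc _ (opp (X eta0))); auto. rewrite E0, K2. reflexivity. }
    assert (HB : Bker add zero a x b y eta0 = zeta).
    { unfold Bker. rewrite Hpc. apply (Pp (opp al)); auto.
      rewrite Ezs. unfold s. rewrite <- As, K1. reflexivity. }
    exists eta0. split; [exact Hy0|]. rewrite HB.
    assert (Zo : Z zeta = opp be).
    { rewrite <- (K2 (Z zeta) be), Ezb, L0. reflexivity. }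
    rewrite Zo, As, <- E0, K2. reflexivity.
  - intros [eta [Hy0 Ew]].
    set (xi := add eta (X eta)).
    assert (Hxi : x xi) by (apply HxX; exists eta; auto).
    assert (Hpc : Pcheck add zero b x eta = xi).
    { apply (Pc _ (opp (X eta))); auto. unfold xi. rewrite K2. reflexivity. }
    destruct (Hay xi) as [al0 [zeta0 [Hal0 [Hz0 [Exi _]]]]].
    assert (HB : Bker add zero a x b y eta = zeta0).
    { unfold Bker. rewrite Hpc. apply (Pp al0); auto. }
    rewrite HB in Ew.
    assert (Ew2 : w = add xi (Z zeta0)) by (rewrite Ew; unfold xi; apply As).
    exists (opp al0), (opp (Z zeta0)).
    assert (E1 : add (opp al0) w = add zeta0 (Z zeta0)).
    { rewrite Ew2, As, Exi, K1. reflexivity. }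
    split; [auto|]. split; [auto|]. split; [|split].
    + rewrite E1, K2. exact Hz0.
    + rewrite E1. apply HzZ. exists zeta0. auto.
    + rewrite Ew2, K2. exact Hxi.
Qed.
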